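(* Fix an integer $n\ge 1$. For every formula $\varphi$ of NM logic in the variables $x_1,\dots,x_n$, $\chi^+([\varphi]_\equiv)$ equals the number of assignments $\mu$ of $x_1,\dots,x_n$ to values in $\{0,\tfrac12,1\}$ such that $\varphi$ evaluates to $1$ in the three-element NM chain $\{0,\tfrac12,1\}$ under $\mu$; i.e. the number of tuples $(a_1,\dots,a_n)\in\{0,\tfrac12,1\}^n$ with $\varphi(a_1,\dots,a_n)=1$.
   Context: An NM algebra is an algebra $\langle A,\wedge,\vee,\odot,\to,\bot,\top\rangle$ such that $(A,\wedge,\vee,\bot,\top)$ is a bounded lattice, $\langle A,\odot,\top\rangle$ is a commutative monoid, and for all $x,y,z$: $x\odot y\le z$ iff $x\le y\to z$; $(x\to y)\vee(y\to x)=\top$; $\neg(x\odot y)\vee((x\wedge y)\to(x\odot y))=\top$ where $\neg x:=x\to\bot$; and $\neg\neg x=x$. The standard NM algebra is $[0,1]$ with $\wedge=\min$, $\vee=\max$, $x\odot y=\min(x,y)$ if $x+y>1$ and $0$ otherwise, $x\to y=1$ if $x\le y$ and $\max(1-x,y)$ otherwise; $\{0,\tfrac12,1\}$ is a subalgebra. $\mathcal{NM}_n$ is the free NM algebra on $n$ generators, i.e. the Lindenbaum algebra of formulas in $x_1,\dots,x_n$ modulo logical equivalence $\equiv$; $[\varphi]_\equiv$ is the class of $\varphi$. It is a finite distributive lattice. A valuation on a distributive lattice $L$ is a map $\nu:L\to\mathbb{R}$ with $\nu(x)+\nu(y)=\nu(x\vee y)+\nu(x\wedge y)$; on a finite distributive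 lattice a valuation is uniquely determined by its values on join-irreducible elements and on $\bot$. An element is join-irreducible if it is not $\bot$ and $x=y\vee z$ implies $x=y$ or $x=z$. The idempotent Euler characteristic $\chi^+:\mathcal{NM}_n\to\mathbb{R}$ is the unique valuation with $\chi^+(\bot)=0$ and, for each join-irreducible $g$, $\chi^+(g)=1$ if $g\odot g=g$ and $\chi^+(g)=0$ otherwise. *)

(* Defs.v *)
From mathcomp Require Import all_boot.
From Stdlib Require Import Reals.
Local Open Scope R_scope.

Set Implicit Arguments.
Unset Strict Implicit.
Unset Printing Implicit Defensive.

Record NMAlg := {
  carrier :> Type;
  nm_meet : carrier -> carrier -> carrier;
  nm_join : carrier -> carrier -> carrier;
  nm_conj : carrier -> carrier -> carrier;
  nm_imp  : carrier -> carrier -> carrier;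
  nm_bot  : carrier;
  nm_top  : carrier;
  nm_meetA : forall x y z, nm_meet x (nm_meet y z) = nm_meet (nm_meet x y) z;
  nm_joinA : forall x y z, nm_join x (nm_join y z) = nm_join (nm_join x y) z;
  nm_meetC : forall x y, nm_meet x y = nm_meet y x;
  nm_joinC : forall x y, nm_join x y = nm_join y x;
  nm_meetK : forall x y, nm_meet x (nm_join x y) = x;
  nm_joinK : forall x y, nm_join x (nm_meet x y) = x;
  nm_bot_le : forall x, nm_meet nm_bot x = nm_bot;
  nm_le_top : forall x, nm_meet x nm_top = x;
  nm_conjA : forall x y z, nm_conj x (nm_conj y z) = nm_conj (nm_conj x y) z;
  nm_conjC : forall x y, nm_conj x y = nm_conj y x;
  nm_conj1 : forall x, nm_conj x nm_top = x;
  (* residuation: x (.) y <= z iff x <= y -> z, with a <= b iff a /\ b = a *)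
  nm_resid : forall x y z,
      nm_meet (nm_conj x y) z = nm_conj x y <-> nm_meet x (nm_imp y z) = x;
  nm_prelin : forall x y, nm_join (nm_imp x y) (nm_imp y x) = nm_top;
  nm_axiom : forall x y,
      nm_join (nm_imp (nm_conj x y) nm_bot)
              (nm_imp (nm_meet x y) (nm_conj x y)) = nm_top;
  nm_invol : forall x, nm_imp (nm_imp x nm_bot) nm_bot = x
}.

Inductive form (n : nat) : Type :=
| FVar  : 'I_n -> form n
| FBot  : form n
| FTop  : form n
| FAnd  : form n -> form n -> form n
| FOr   : form n -> form n -> form n
| FConj : form n -> form n -> form n
| FImp  : form n -> form n -> form n.

Arguments FBot {n}.
Arguments FTop {n}.

Fixpoint eval (n : nat) (A : NMAlg) (v : 'I_n -> A) (f : form n) : A :=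
  match f with
  | FVar i => v i
  | FBot => @nm_bot A
  | FTop => @nm_top A
  | FAnd a b => @nm_meet A (@eval n A v a) (@eval n A v b)
  | FOr a b => @nm_join A (@eval n A v a) (@eval n A v b)
  | FConj a b => @nm_conj A (@eval n A v a) (@eval n A v b)
  | FImp a b => @nm_imp A (@eval n A v a) (@eval n A v b)
  end.
Arguments eval {n} A v f.

(* Logical equivalence = equality in the Lindenbaum / free NM algebra NM_n:
   the identity phi = psi holds in every NM algebra. *)
Definition fequiv (n : nat) (f g : form n) : Prop :=
  forall (A : NMAlg) (v : 'I_n -> A), eval A v f = eval A v g.

Definition join_irreducible (n : nat) (g : form n) : Prop :=
  ~ fequiv g FBot /\
  forall a b : form n, fequiv g (FOr a b) -> fequiv g a \/ fequiv g b.

Definition idempotent (n : nat) (g : form n) : Prop := fequiv (FConj g g) g.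

(* A valuation on NM_n, presented as a map on formulas constant on classes. *)
Definition valuation (n : nat) (nu : form n -> R) : Prop :=
  (forall a b, fequiv a b -> nu a = nu b) /\
  (forall a b, (nu a + nu b = nu (FOr a b) + nu (FAnd a b))%R).

Definition is_chi_plus (n : nat) (nu : form n -> R) : Prop :=
  valuation nu /\ nu FBot = 0%R /\
  forall g : form n, join_irreducible g ->
    (idempotent g -> nu g = 1%R) /\ (~ idempotent g -> nu g = 0%R).

Definition std_conj (x y : R) : R :=
  if Rlt_dec 1 (x + y) then Rmin x y else 0.
Definition std_imp (x y : R) : R :=
  if Rle_dec x y then 1 else Rmax (1 - x) y.

Fixpoint evalR (n : nat) (v : 'I_n -> R) (f : form n) : R :=
  match f with
  | FVar i => v i
  | FBot => 0
  | FTop => 1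
  | FAnd a b => Rmin (evalR v a) (evalR v b)
  | FOr a b => Rmax (evalR v a) (evalR v b)
  | FConj a b => std_conj (evalR v a) (evalR v b)
  | FImp a b => std_imp (evalR v a) (evalR v b)
  end.

Definition is_one (x : R) : bool := if Req_EM_T x 1 then true else false.

Definition three_val (k : 'I_3) : R := (INR (nat_of_ord k) / 2)%R.

Definition count_models3 (n : nat) (f : form n) : nat :=
  (#|[set mu : {ffun 'I_n -> 'I_3} | is_one (evalR (fun i => three_val (mu i)) f)]|)%N.

(* Main.v *)
Require Import Defs.
From mathcomp Require Import all_boot.
From Stdlib Require Import Reals.
From Stdlib Require Import Lra ClassicalEpsilon ProofIrrelevance.
From mathcomp Require Import zify.

Set Implicit Arguments.
Unset Strict Implicit.
Unset Printing Implicit Defensive.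
Set Bullet Behavior "Strict Subproofs".


Section NMTheory.
Variable A : NMAlg.
Local Notation mt := (@nm_meet A).
Local Notation jn := (@nm_join A).
Local Notation cj := (@nm_conj A).
Local Notation im := (@nm_imp A).
Local Notation bo := (@nm_bot A).
Local Notation tp := (@nm_top A).
Definition ng (x : A) := im x bo.
Definition le (x y : A) := mt x y = x.
Definition sq (x : A) := cj x x.

Lemma mtC x y : mt x y = mt y x. Proof. exact: nm_meetC. Qed.
Lemma jnC x y : jn x y = jn y x. Proof. exact: nm_joinC. Qed.
Lemma cjC x y : cj x y = cj y x. Proof. exact: nm_conjC. Qed.
Lemma cjA x y z : cj x (cj y z) = cj (cj x y) z. Proof. exact: nm_conjA. Qed.
Lemma cj1 x : cj x tp = x. Proof. exact: nm_conj1. Qed.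
Lemma cj1l x : cj tp x = x. Proof. by rewrite cjC cj1. Qed.

Lemma mtxx x : mt x x = x.
Proof. have h1 := nm_joinK x x. have h2 := nm_meetK x (mt x x). by rewrite h1 in h2. Qed.
Lemma jnxx x : jn x x = x.
Proof. have h1 := nm_meetK x x. have h2 := nm_joinK x (jn x x). by rewrite h1 in h2. Qed.

Lemma le_refl x : le x x. Proof. exact: mtxx. Qed.
Lemma leJ x y : le x y <-> jn x y = y.
Proof.
split=> h.
- by rewrite -h jnC mtC nm_joinK.
- by rewrite /le -h nm_meetK.
Qed.
Lemma le_trans x y z : le x y -> le y z -> le x z.
Proof. rewrite /le => h1 h2. by rewrite -h1 -nm_meetA h2. Qed.
Lemma le_anti x y : le x y -> le y x -> x = y.
Proof. rewrite /le => h1 h2. by rewrite -h1 mtC h2. Qed.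
Lemma le_mt x y z : le z x -> le z y -> le z (mt x y).
Proof. rewrite /le => h1 h2. by rewrite nm_meetA h1 h2. Qed.
Lemma mt_le1 x y : le (mt x y) x.
Proof. by rewrite /le mtC nm_meetA mtxx. Qed.
Lemma mt_le2 x y : le (mt x y) y.
Proof. rewrite mtC; exact: mt_le1. Qed.
Lemma le_jn1 x y : le x (jn x y). Proof. exact: nm_meetK. Qed.
Lemma le_jn2 x y : le y (jn x y). Proof. rewrite jnC; exact: le_jn1. Qed.
Lemma jn_le x y z : le x z -> le y z -> le (jn x y) z.
Proof. rewrite !leJ => h1 h2. by rewrite -nm_joinA h2 h1. Qed.
Lemma le_bot x : le bo x. Proof. exact: nm_bot_le. Qed.
Lemma le_top x : le x tp. Proof. exact: nm_le_top. Qed.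
Lemma top_le x : le tp x -> x = tp.
Proof. move=> h; apply: le_anti => //; exact: le_top. Qed.
Lemma le_bot_eq x : le x bo -> x = bo.
Proof. move=> h; apply: le_anti => //; exact: le_bot. Qed.

Lemma resid x y z : le (cj x y) z <-> le x (im y z). Proof. exact: nm_resid. Qed.

Lemma cj_monol x y z : le x y -> le (cj x z) (cj y z).
Proof. move=> h. apply/resid. apply: le_trans h _. apply/resid. exact: le_refl. Qed.
Lemma cj_monor x y z : le x y -> le (cj z x) (cj z y).
Proof. move=> h. rewrite ![cj z _]cjC. exact: cj_monol. Qed.
Lemma cj_mono x y x' y' : le x x' -> le y y' -> le (cj x y) (cj x' y').
Proof. move=> h1 h2. apply: le_trans (cj_monol _ h1) _. exact: cj_monor. Qed.
Lemma cj_le1 x y : le (cj x y) x.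
Proof. have := cj_monor x (le_top y). by rewrite cj1. Qed.
Lemma cj_le2 x y : le (cj x y) y.
Proof. rewrite cjC; exact: cj_le1. Qed.
Lemma mp x y : le (cj x (im x y)) y.
Proof. rewrite cjC. apply/resid. exact: le_refl. Qed.
Lemma mp' x y : le (cj (im x y) x) y.
Proof. rewrite cjC; exact: mp. Qed.
Lemma le_im x y : le x y <-> im x y = tp.
Proof.
split=> h.
- apply: top_le. apply/resid. by rewrite cj1l.
- have : le tp (im x y) by rewrite h; exact: le_refl.
  by move/resid; rewrite cj1l.
Qed.
Lemma cj0 x : cj x bo = bo.
Proof. apply: le_bot_eq. exact: cj_le2. Qed.
Lemma cj0l x : cj bo x = bo.
Proof. by rewrite cjC cj0. Qed.

Lemma le_ext a b : (forall z, le z a <-> le z b) -> a = b.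
Proof. move=> h. apply: le_anti; [apply/h|apply/h]; exact: le_refl. Qed.

Lemma cj_jn x y z : cj x (jn y z) = jn (cj x y) (cj x z).
Proof.
apply: le_anti.
- rewrite cjC. apply/resid. apply: jn_le; apply/resid; rewrite cjC.
  + exact: le_jn1.
  + exact: le_jn2.
- apply: jn_le; apply: cj_monor; [exact: le_jn1|exact: le_jn2].
Qed.

Lemma im_monor x y z : le y z -> le (im x y) (im x z).
Proof. move=> h. apply/resid. apply: le_trans h. exact: mp'. Qed.
Lemma im_anti x y z : le x y -> le (im y z) (im x z).
Proof. move=> h. apply/resid. apply: le_trans (mp' y z). exact: cj_monor. Qed.

Lemma le_ng x y : le x (ng y) <-> le (cj x y) bo.
Proof. by rewrite resid. Qed.
Lemma le_ngC x y : le x (ng y) -> le y (ng x).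
Proof. rewrite !le_ng cjC; done. Qed.
Lemma ngK x : ng (ng x) = x. Proof. exact: nm_invol. Qed.
Lemma ng_anti x y : le x y -> le (ng y) (ng x).
Proof. exact: im_anti. Qed.
Lemma ng_le x y : le (ng y) (ng x) -> le x y.
Proof. move/ng_anti. by rewrite !ngK. Qed.
Lemma ng_top : ng tp = bo.
Proof. apply: le_bot_eq. have := mp tp bo. by rewrite cj1l. Qed.
Lemma ng_bot : ng bo = tp.
Proof. apply: top_le. apply/resid. rewrite cj0. exact: le_refl. Qed.
Lemma ng_mt x y : ng (mt x y) = jn (ng x) (ng y).
Proof.
apply: le_anti.
- apply: ng_le. rewrite ngK. apply: le_mt.
  + apply: le_trans (ng_anti (le_jn1 (ng x) (ng y))) _; rewrite ngK; exact: le_refl.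
  + apply: le_trans (ng_anti (le_jn2 (ng x) (ng y))) _; rewrite ngK; exact: le_refl.
- apply: jn_le; apply: ng_anti; [exact: mt_le1|exact: mt_le2].
Qed.
Lemma ng_cj x y : ng (cj x y) = im x (ng y).
Proof.
apply: le_ext => z. rewrite le_ng -resid le_ng. by rewrite cjA.
Qed.
Lemma im_contra x y : im x y = im (ng y) (ng x).
Proof.
apply: le_ext => z. rewrite -!resid -cjA (cjC (ng y)) cjA -le_ng ngK.
done.
Qed.
Lemma cj_ng x : cj x (ng x) = bo.
Proof. apply: le_bot_eq. exact: mp. Qed.

Lemma sq_le x : le (sq x) x. Proof. exact: cj_le1. Qed.
Lemma sq_cube x : sq x = cj (sq x) x.
Proof.
apply: le_anti; last exact: cj_le1.
have ax := nm_axiom x x. rewrite mtxx in ax.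
have e : sq x = jn (cj (sq x) (ng (sq x))) (cj (sq x) (im x (sq x))).
  by rewrite -cj_jn ax cj1.
rewrite {1}e.
apply: jn_le.
- rewrite cj_ng. exact: le_bot.
- rewrite /sq -!cjA. apply: cj_monor. exact: mp.
Qed.
Lemma sq_idem x : sq (sq x) = sq x.
Proof.
rewrite {1}/sq {1}/sq. rewrite cjA -/(sq x) -sq_cube -/(sq x).
by rewrite -sq_cube.
Qed.
Lemma cj_le_sq x y : le (cj x y) (jn (sq x) (sq y)).
Proof.
have e : cj x y = jn (cj (cj x y) (im x y)) (cj (cj x y) (im y x)).
  by rewrite -cj_jn nm_prelin cj1.
rewrite e. apply: jn_le.
- apply: le_trans _ (le_jn2 _ _). rewrite (cjC x y) -cjA. apply: cj_monor. exact: mp.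
- apply: le_trans _ (le_jn1 _ _). rewrite -cjA. apply: cj_monor. exact: mp.
Qed.
Lemma sq_jn x y : le (sq (jn x y)) (jn (sq x) (sq y)).
Proof.
have h1 : le (cj x y) (jn (sq x) (sq y)) by exact: cj_le_sq.
have h2 : le (cj y x) (jn (sq x) (sq y)) by rewrite cjC.
have h3 : le (sq x) (jn (sq x) (sq y)) by exact: le_jn1.
have h4 : le (sq y) (jn (sq x) (sq y)) by exact: le_jn2.
rewrite {1}/sq cj_jn (cjC (jn x y) x) (cjC (jn x y) y) !cj_jn.
by apply: jn_le; apply: jn_le.
Qed.
Lemma sq_top : sq tp = tp. Proof. by rewrite /sq cj1. Qed.

Lemma split_sq g : g = jn (sq g) (mt g (ng g)).
Proof.
apply: le_anti; last by apply: jn_le; [exact: sq_le|exact: mt_le1].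
have ax := nm_axiom g g. rewrite mtxx in ax.
have e : g = jn (cj g (ng (sq g))) (cj g (im g (sq g))).
  by rewrite -cj_jn ax cj1.
rewrite {1}e jnC. apply: jn_le.
- apply: le_trans _ (le_jn1 _ _). exact: mp.
- apply: le_trans _ (le_jn2 _ _). apply: le_mt; first exact: cj_le1.
  apply/le_ng. rewrite cjC cjA -/(sq g). exact: mp.
Qed.

Lemma split_top g h k : jn h k = tp -> g = jn (cj g h) (cj g k).
Proof. move=> e. by rewrite -cj_jn e cj1. Qed.

Lemma cjACA a b c d : cj (cj a b) (cj c d) = cj (cj a c) (cj b d).
Proof. by rewrite -!cjA (cjA b c d) (cjC b c) -cjA. Qed.

Section Filt.
Variable e : A.
Hypothesis eidem : cj e e = e.
Definition lee x y := le (cj e x) y.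
Definition eqe x y := lee x y /\ lee y x.

Lemma lee_im x y : lee x y <-> le e (im x y). Proof. exact: resid. Qed.
Lemma lee_refl x : lee x x. Proof. exact: cj_le2. Qed.
Lemma lee_trans x y z : lee x y -> lee y z -> lee x z.
Proof.
rewrite /lee => h1 h2. rewrite -eidem -cjA. apply: le_trans h2. exact: cj_monor.
Qed.
Lemma le_lee x y : le x y -> lee x y.
Proof. move=> h. apply: le_trans h. exact: cj_le2. Qed.
Lemma eqe_refl x : eqe x x. Proof. split; exact: lee_refl. Qed.
Lemma eqe_sym x y : eqe x y -> eqe y x. Proof. by case. Qed.
Lemma eqe_trans x y z : eqe x y -> eqe y z -> eqe x z.
Proof. move=> [h1 h2] [h3 h4]; split; apply: lee_trans; eassumption. Qed.

Lemma lee_mt x x' y y' : lee x x' -> lee y y' -> lee (mt x y) (mt x' y').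
Proof.
rewrite /lee => h1 h2. apply: le_mt.
- apply: le_trans h1. apply: cj_monor. exact: mt_le1.
- apply: le_trans h2. apply: cj_monor. exact: mt_le2.
Qed.
Lemma lee_jn x x' y y' : lee x x' -> lee y y' -> lee (jn x y) (jn x' y').
Proof.
rewrite /lee => h1 h2. rewrite cj_jn. apply: jn_le.
- apply: le_trans h1 _. exact: le_jn1.
- apply: le_trans h2 _. exact: le_jn2.
Qed.
Lemma lee_cj x x' y y' : lee x x' -> lee y y' -> lee (cj x y) (cj x' y').
Proof.
rewrite /lee => h1 h2. rewrite -eidem cjACA. exact: cj_mono.
Qed.
Lemma lee_imp x x' y y' : lee x' x -> lee y y' -> lee (im x y) (im x' y').
Proof.
rewrite /lee => h1 h2. apply/(resid (cj e (im x y)) x' y').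
have -> : cj (cj e (im x y)) x' = cj e (cj (im x y) (cj e x')).
  rewrite -{1}eidem -!cjA. congr (cj e _). by rewrite !cjA (cjC e (im x y)).
apply: le_trans h2. apply: cj_monor.
apply: le_trans (mp' x y). exact: cj_monor.
Qed.
Lemma eqe_mt x x' y y' : eqe x x' -> eqe y y' -> eqe (mt x y) (mt x' y').
Proof. move=> [??] [??]; split; exact: lee_mt. Qed.
Lemma eqe_jn x x' y y' : eqe x x' -> eqe y y' -> eqe (jn x y) (jn x' y').
Proof. move=> [??] [??]; split; exact: lee_jn. Qed.
Lemma eqe_cj x x' y y' : eqe x x' -> eqe y y' -> eqe (cj x y) (cj x' y').
Proof. move=> [??] [??]; split; exact: lee_cj. Qed.
Lemma eqe_im x x' y y' : eqe x x' -> eqe y y' -> eqe (im x y) (im x' y').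
Proof. move=> [??] [??]; split; exact: lee_imp. Qed.

Lemma eqe_mt_l x y : lee x y -> eqe (mt x y) x.
Proof.
move=> h; split; first exact: le_lee (mt_le1 _ _).
apply: le_mt => //. exact: cj_le2.
Qed.
Lemma eqe_mt_r x y : lee y x -> eqe (mt x y) y.
Proof. rewrite mtC. exact: eqe_mt_l. Qed.
Lemma eqe_jn_r x y : lee x y -> eqe (jn x y) y.
Proof.
move=> h; split; last exact: le_lee (le_jn2 _ _).
rewrite /lee cj_jn. apply: jn_le => //. exact: cj_le2.
Qed.
Lemma eqe_jn_l x y : lee y x -> eqe (jn x y) x.
Proof. rewrite jnC. exact: eqe_jn_r. Qed.
Lemma eqe_cj_bot x y : lee x (ng y) -> eqe (cj x y) bo.
Proof.
move=> h; split; last exact: le_lee (le_bot _).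
rewrite /lee cjA. apply: le_trans (cj_monol _ h) _. rewrite cjC. exact: mp.
Qed.
Lemma lee_ng_cj x y : le e (ng (cj x y)) -> lee x (ng y).
Proof. move=> h. rewrite /lee. apply/le_ng. rewrite -cjA. exact/le_ng. Qed.
Lemma eqe_cj_mt x y : le e (im (mt x y) (cj x y)) -> eqe (cj x y) (mt x y).
Proof.
move=> h; split.
- apply: le_lee. apply: le_mt; [exact: cj_le1|exact: cj_le2].
- exact/lee_im.
Qed.
Lemma eqe_im_top x y : lee x y -> eqe (im x y) tp.
Proof.
move=> h; split; first exact: le_lee (le_top _).
rewrite /lee cj1. exact/lee_im.
Qed.
Lemma eqe_im_jn x y : ~ lee x y ->
  (le e (ng (cj x (ng y))) \/ le e (im (mt x (ng y)) (cj x (ng y)))) ->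
  eqe (im x y) (jn (ng x) y).
Proof.
move=> nh [h|h].
- exfalso; apply: nh. apply/lee_im. by rewrite ng_cj ngK in h.
- split; last first.
  + apply: le_lee. apply: jn_le.
    * apply/resid. apply: le_trans (le_bot y). exact: mp'.
    * apply/resid. exact: cj_le1.
  + have dm : jn (ng x) y = ng (mt x (ng y)) by rewrite ng_mt ngK.
    rewrite dm /lee. apply/le_ng.
    rewrite -cjA (cjC (im x y)) cjA.
    have h' : lee (mt x (ng y)) (cj x (ng y)) by exact/lee_im.
    apply: le_trans (cj_monol _ h') _.
    rewrite cjC cjA. apply: le_trans (cj_monol _ (mp' x y)) _. exact: mp.
Qed.
End Filt.

Lemma build_e (c : A) (I : eqType) (s : seq I) (h k : I -> A) :
  (forall i, jn (h i) (k i) = tp) -> ~ le tp c ->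
  exists e, cj e e = e /\ ~ le e c /\
    (forall i, i \in s -> le e (h i) \/ le e (k i)).
Proof.
move=> hk nc. elim: s => [|a s [e [ei [ne hs]]]].
- exists tp; split; first exact: cj1. by split.
- have idem2 : forall z, cj (cj e (sq z)) (cj e (sq z)) = cj e (sq z).
    by move=> z; rewrite cjACA ei -/(sq (sq z)) sq_idem.
  have mono : forall z i, i \in s -> le (cj e (sq z)) (h i) \/ le (cj e (sq z)) (k i).
    move=> z i /hs [hh|hh]; [left|right]; apply: le_trans hh; exact: cj_le1.
  case: (classic (le (cj e (sq (h a))) c)) => c1; last first.
    exists (cj e (sq (h a))); split => //; split => // i.
    rewrite inE => /orP [/eqP ->|/mono] //. left. apply: le_trans (cj_le2 _ _) _. exact: sq_le.
  case: (classic (le (cj e (sq (k a))) c)) => c2; last first.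
    exists (cj e (sq (k a))); split => //; split => // i.
    rewrite inE => /orP [/eqP ->|/mono] //. right. apply: le_trans (cj_le2 _ _) _. exact: sq_le.
  exfalso; apply: ne.
  have : le (cj e (sq (jn (h a) (k a)))) c.
    apply: le_trans (cj_monor _ (sq_jn _ _)) _. rewrite cj_jn. exact: jn_le.
  by rewrite hk sq_top cj1.
Qed.

End NMTheory.


Definition asb (P : Prop) : bool := if excluded_middle_informative P then true else false.
Lemma asbP (P : Prop) : asb P = true <-> P.
Proof. rewrite /asb. case: excluded_middle_informative => //. Qed.
Lemma asbF (P : Prop) : asb P = false <-> ~ P.
Proof. rewrite /asb. case: excluded_middle_informative => //. Qed.

Definition Lit (n : nat) := (('I_n * bool) + bool)%type.
Definition lneg n (l : Lit n) : Lit n :=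
  match l with inl (i, b) => inl (i, ~~ b) | inr b => inr (~~ b) end.
Lemma lnegK n : involutive (@lneg n).
Proof. by case=> [[i b]|b] /=; rewrite negbK. Qed.

Definition lv (A : NMAlg) n (v : 'I_n -> A) (l : Lit n) : A :=
  match l with
  | inl (i, true) => v i
  | inl (i, false) => ng (v i)
  | inr true => @nm_top A
  | inr false => @nm_bot A
  end.
Lemma lv_neg (A : NMAlg) n (v : 'I_n -> A) l : lv v (lneg l) = ng (lv v l).
Proof.
case: l => [[i [|]]|[|]] /=.
- done.
- by rewrite ngK.
- by rewrite ng_top.
- by rewrite ng_bot.
Qed.

Fixpoint lit n (leb : Lit n -> Lit n -> bool) (f : form n) : Lit n :=
  match f with
  | FVar i => inl (i, true)
  | FBot => inr false
  | FTop => inr true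
  | FAnd a b => let la := lit leb a in let lb := lit leb b in
                if leb la lb then la else lb
  | FOr a b => let la := lit leb a in let lb := lit leb b in
                if leb la lb then lb else la
  | FConj a b => let la := lit leb a in let lb := lit leb b in
                if leb la (lneg lb) then inr false else if leb la lb then la else lb
  | FImp a b => let la := lit leb a in let lb := lit leb b in
                if leb la lb then inr true else if leb (lneg la) lb then lb else lneg la
  end.

Section LitSound.
Variable A : NMAlg.
Variable n : nat.
Variable v : 'I_n -> A.
Variable e : A.
Hypothesis eidem : nm_conj e e = e.
Hypothesis Q1 : forall l l' : Lit n,
  le e (nm_imp (lv v l) (lv v l')) \/ le e (nm_imp (lv v l') (lv v l)).
Hypothesis Q2 : forall l l' : Lit n,
  le e (ng (nm_conj (lv v l) (lv v l'))) \/
  le e (nm_imp (nm_meet (lv v l) (lv v l')) (nm_conj (lv v l) (lv v l'))).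
Definition lebA (l l' : Lit n) : bool := asb (lee e (lv v l) (lv v l')).

Lemma tot l l' : ~ lee e (lv v l) (lv v l') -> lee e (lv v l') (lv v l).
Proof. by case: (Q1 l l') => /lee_im. Qed.

Lemma lit_sound f : eqe e (eval A v f) (lv v (lit lebA f)).
Proof.
elim: f => [i| | |a IHa b IHb|a IHa b IHb|a IHa b IHb|a IHa b IHb] /=;
  try exact: eqe_refl.
- set la := lit lebA a; set lb := lit lebA b.
  apply: (eqe_trans eidem (eqe_mt IHa IHb)).
  case E: (lebA la lb).
  + apply: eqe_mt_l. exact/asbP.
  + apply: eqe_mt_r. apply: tot. exact/asbF.
- set la := lit lebA a; set lb := lit lebA b.
  apply: (eqe_trans eidem (eqe_jn IHa IHb)).
  case E: (lebA la lb).
  + apply: eqe_jn_r. exact/asbP.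
  + apply: eqe_jn_l. apply: tot. exact/asbF.
- set la := lit lebA a; set lb := lit lebA b.
  apply: (eqe_trans eidem (eqe_cj eidem IHa IHb)).
  case E1: (lebA la (lneg lb)).
  + apply: eqe_cj_bot. move/asbP: E1. by rewrite lv_neg.
  + case: (Q2 la lb) => h.
    * exfalso. move/asbF: E1; apply. rewrite lv_neg. exact: lee_ng_cj.
    * apply: (eqe_trans eidem (eqe_cj_mt h)).
      case E: (lebA la lb).
      -- apply: eqe_mt_l. exact/asbP.
      -- apply: eqe_mt_r. apply: tot. exact/asbF.
- set la := lit lebA a; set lb := lit lebA b.
  apply: (eqe_trans eidem (eqe_im eidem IHa IHb)).
  case E1: (lebA la lb).
  + apply: eqe_im_top. exact/asbP.
  + have q := Q2 la (lneg lb). rewrite !lv_neg in q.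
    have h := eqe_im_jn ((asbF _).1 E1) q. apply: (eqe_trans eidem h).
    case E: (lebA (lneg la) lb).
    * apply: eqe_jn_r. move/asbP: E. by rewrite lv_neg.
    * rewrite lv_neg. apply: eqe_jn_l. rewrite -lv_neg. apply: tot. exact/asbF.
Qed.
End LitSound.


Lemma sum_lt (I : finType) (F G : I -> nat) j :
  (forall i, F i <= G i) -> F j < G j -> \sum_i F i < \sum_i G i.
Proof.
move=> h hj. rewrite (bigD1 j) //= [X in _ < X](bigD1 j) //=.
rewrite -addSn. apply: leq_add => //. apply: leq_sum => i _; exact: h.
Qed.

Section ValCons.
Variable n : nat.
Variable leb : Lit n -> Lit n -> bool.
Hypothesis Lrefl : forall l, leb l l.
Hypothesis Ltrans : forall l1 l2 l3, leb l1 l2 -> leb l2 l3 -> leb l1 l3.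
Hypothesis Ltot : forall l l', leb l l' || leb l' l.
Hypothesis Lneg : forall l l', leb l l' = leb (lneg l') (lneg l).
Hypothesis Lbot : forall l, leb (inr false) l.
Hypothesis Ltop : forall l, leb l (inr true).
Hypothesis Lnt : ~~ leb (inr true) (inr false).

Definition NN := #|{: Lit n}|.
Definition Acnt l := \sum_(l' : Lit n) (leb l' l : nat).
Definition Bcnt l := \sum_(l' : Lit n) (~~ leb l l' : nat).
Definition Sc l := Acnt l + Bcnt l.

Lemma AB l : \sum_(l' : Lit n) (leb l l' : nat) + Bcnt l = NN.
Proof.
rewrite /Bcnt -big_split /= /NN -sum1_card. apply: eq_bigr => i _. by case: (leb l i).
Qed.
Lemma Aneg l : Acnt (lneg l) = \sum_(l' : Lit n) (leb l l' : nat).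
Proof.
rewrite /Acnt (reindex_inj (inv_inj (@lnegK n))) /=.
apply: eq_bigr => i _. by rewrite Lneg !lnegK.
Qed.
Lemma Bneg l : Bcnt (lneg l) = \sum_(l' : Lit n) (~~ leb l' l : nat).
Proof.
rewrite /Bcnt (reindex_inj (inv_inj (@lnegK n))) /=.
apply: eq_bigr => i _. by rewrite Lneg !lnegK.
Qed.
Lemma Sneg l : Sc (lneg l) + Sc l = NN + NN.
Proof.
rewrite /Sc Aneg Bneg.
have h1 := AB l.
have h2 : Acnt l + \sum_(l' : Lit n) (~~ leb l' l : nat) = NN.
  rewrite /Acnt -big_split /= /NN -sum1_card. apply: eq_bigr => i _. by case: (leb i l).
lia.
Qed.
Lemma Smono l l' : leb l l' -> Sc l <= Sc l'.
Proof.
move=> h. rewrite /Sc. apply: leq_add; apply: leq_sum => i _.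
- case E: (leb i l) => //=. by rewrite (Ltrans E h).
- case E1: (leb l i); case E2: (leb l' i) => //=. by rewrite (Ltrans h E2) in E1.
Qed.
Lemma Sstrict l l' : leb l l' -> ~~ leb l' l -> Sc l < Sc l'.
Proof.
move=> h nh. rewrite /Sc. rewrite addnC [Acnt l' + _]addnC.
apply: leq_trans (_ : Bcnt l + Acnt l < Bcnt l' + Acnt l) _.
- rewrite ltn_add2r. apply: (@sum_lt _ _ _ l).
  + move=> i. case E1: (leb l i); case E2: (leb l' i) => //=. by rewrite (Ltrans h E2) in E1.
  + by rewrite Lrefl (negbTE nh).
- rewrite leq_add2l. apply: leq_sum => i _.
  case E: (leb i l) => //=. by rewrite (Ltrans E h).
Qed.

Definition Sb := Sc (inr false).
Definition St := Sc (inr true).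
Definition KK := St - Sb.
Definition DD := NN + NN.
Ltac nlia := move=> *; clear Lnt Lrefl Ltrans Ltot Lneg Lbot Ltop; unfold DD, KK in *; lia.
Ltac splitifs := repeat match goal with |- context [if ?b then _ else _] => let E := fresh "E" in destruct b eqn:E end.
Definition ff k := if k + k < KK then k else if KK < k + k then DD - (KK - k) else NN.
Definition Wv l := ff (Sc l - Sb).

Lemma Sbt : Sb + St = DD.
Proof. rewrite /Sb /St /DD -(Sneg (inr false)) /=. clear Lnt Lrefl Ltrans Ltot Lneg Lbot Ltop. lia. Qed.
Lemma Sb_le l : Sb <= Sc l. Proof. exact: Smono. Qed.
Lemma le_St l : Sc l <= St. Proof. exact: Smono. Qed.
Lemma Sb_lt : Sb < St.
Proof. apply: Sstrict => //. Qed.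

Lemma Wv_bot : Wv (inr false) = 0.
Proof. rewrite /Wv /ff subnn /KK. have := Sb_lt. case: ifP => //; nlia. Qed.
Lemma Wv_top : Wv (inr true) = DD.
Proof.
rewrite /Wv /ff -/St -/KK /KK. have := Sb_lt. have := Sbt.
move=> *; splitifs; nlia.
Qed.
Lemma Wv_le l : Wv l <= DD.
Proof.
rewrite /Wv /ff /KK. have := Sbt. have := le_St l. have := Sb_le l.
move=> *; splitifs; nlia.
Qed.
Lemma Wv_neg l : Wv (lneg l) = DD - Wv l.
Proof.
rewrite /Wv /ff /KK. have := Sbt. have := le_St l. have := Sb_le l.
have := Sneg l. rewrite -/Sb -/St /DD.
move=> *; splitifs; nlia.
Qed.
Lemma ff_mono k k' : k <= k' -> k' <= KK -> ff k <= ff k'.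
Proof.
rewrite /ff /KK. have := Sbt. rewrite /DD. move=> *.
move=> *; splitifs; nlia.
Qed.
Lemma ff_strict k k' : k < k' -> k' <= KK -> ff k < ff k'.
Proof.
rewrite /ff /KK. have := Sbt. rewrite /DD. move=> *.
move=> *; splitifs; nlia.
Qed.
Lemma Wv_leb l l' : leb l l' = (Wv l <= Wv l').
Proof.
case E: (leb l l').
- apply/esym. rewrite /Wv. apply: ff_mono.
  + have := Smono E. have := Sb_le l. nlia.
  + rewrite /KK. have := le_St l'. nlia.
- apply/esym/negbTE. rewrite -ltnNge. rewrite /Wv. apply: ff_strict.
  + have h1 : leb l' l by move: (Ltot l l'); rewrite E.
    have := Sstrict h1 (negbT E). have := Sb_le l'. nlia.
  + rewrite /KK. have := le_St l. nlia.
Qed.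
End ValCons.


Lemma evalR_ext n (p q : 'I_n -> R) f : (forall i, p i = q i) -> evalR p f = evalR q f.
Proof. move=> h. elim: f => [i| | |a IHa b IHb|a IHa b IHb|a IHa b IHb|a IHa b IHb] /=; by rewrite ?IHa ?IHb. Qed.

Section RealSide.
Variable n : nat.
Variable leb : Lit n -> Lit n -> bool.
Variable val : Lit n -> R.
Hypothesis V0 : val (inr false) = 0%R.
Hypothesis V1 : val (inr true) = 1%R.
Hypothesis Vn : forall l, val (lneg l) = (1 - val l)%R.
Hypothesis Vle : forall l l', leb l l' = true <-> (val l <= val l')%R.

Lemma Vlt l l' : leb l l' = false -> (val l' < val l)%R.
Proof.
move=> h. apply: Rnot_le_lt => h'. move/Vle: h'. by rewrite h.
Qed.

Lemma evalR_lit f : evalR (fun i => val (inl (i, true))) f = val (lit leb f).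
Proof.
elim: f => [i| | |a IHa b IHb|a IHa b IHb|a IHa b IHb|a IHa b IHb] /=.
- done.
- by rewrite V0.
- by rewrite V1.
- rewrite IHa IHb. case E: (leb _ _).
  + move/Vle: E => E. by rewrite Rmin_left.
  + move/Vlt: E => E. rewrite Rmin_right //. lra.
- rewrite IHa IHb. case E: (leb _ _).
  + move/Vle: E => E. by rewrite Rmax_right.
  + move/Vlt: E => E. rewrite Rmax_left //. lra.
- rewrite IHa IHb /std_conj. case E1: (leb _ (lneg _)).
  + move/Vle: E1. rewrite Vn => E1. case: Rlt_dec => h; first lra. by rewrite V0.
  + move/Vlt: E1. rewrite Vn => E1. case: Rlt_dec => h; last lra.
    case E: (leb _ _).
    * move/Vle: E => E. by rewrite Rmin_left.
    * move/Vlt: E => E. rewrite Rmin_right //. lra.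
- rewrite IHa IHb /std_imp. case E1: (leb _ _).
  + move/Vle: E1 => E1. case: Rle_dec => h; last lra. by rewrite V1.
  + move/Vlt: E1 => E1. case: Rle_dec => h; first lra.
    case E: (leb (lneg _) _).
    * move/Vle: E. rewrite Vn => E. by rewrite Rmax_right.
    * move/Vlt: E. rewrite Vn => E. rewrite Rmax_left; last lra. by rewrite ?Vn.
Qed.
End RealSide.


Definition gp n (js : {ffun 'I_n -> 'I_(DD n).+1}) : 'I_n -> R :=
  fun i => (INR (js i) / INR (DD n))%R.

Lemma asb_iff (P Q : Prop) : (P <-> Q) -> asb P = asb Q.
Proof.
move=> h. case E: (asb P); apply/esym.
- apply/asbP. apply/h. exact/asbP.
- apply/asbF => q. move/asbF: E; apply. exact/h.
Qed.

Lemma INR_leq (a b : nat) : (a <= b)%N -> (INR a <= INR b)%R.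
Proof. move/leP. exact: le_INR. Qed.
Lemma INR_leq' (a b : nat) : (INR a <= INR b)%R -> (a <= b)%N.
Proof. move/INR_le. by move/leP. Qed.

Lemma one_dir n (f g : form n) :
  (forall js, evalR (gp js) f = evalR (gp js) g) ->
  forall (A : NMAlg) (v : 'I_n -> A), le (eval A v f) (eval A v g).
Proof.
move=> H A v. apply: NNPP => nle.
set x := eval A v f. set y := eval A v g.
set c := nm_imp x y.
have nc : ~ le (nm_top A) c.
  move=> h. apply: nle. apply/le_im. exact: top_le.
pose h (i : (Lit n * Lit n * bool)%type) : A := match i with
  | (l, l', true) => nm_imp (lv v l) (lv v l')
  | (l, l', false) => ng (nm_conj (lv v l) (lv v l')) end.
pose k (i : (Lit n * Lit n * bool)%type) : A := match i with
  | (l, l', true) => nm_imp (lv v l') (lv v l)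
  | (l, l', false) => nm_imp (nm_meet (lv v l) (lv v l')) (nm_conj (lv v l) (lv v l')) end.
have hk : forall i, nm_join (h i) (k i) = nm_top A.
  by case=> [[l l'] [|]]; [exact: nm_prelin|exact: nm_axiom].
have [e [eidem [ne Hq]]] := build_e (enum {: Lit n * Lit n * bool}) hk nc.
have Q1 : forall l l' : Lit n,
  le e (nm_imp (lv v l) (lv v l')) \/ le e (nm_imp (lv v l') (lv v l)).
  move=> l l'. exact: (Hq (l, l', true) (mem_enum _ _)).
have Q2 : forall l l' : Lit n,
  le e (ng (nm_conj (lv v l) (lv v l'))) \/
  le e (nm_imp (nm_meet (lv v l) (lv v l')) (nm_conj (lv v l) (lv v l'))).
  move=> l l'. exact: (Hq (l, l', false) (mem_enum _ _)).
set leb := lebA v e.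
have Lrefl : forall l, leb l l by move=> l; apply/asbP; exact: lee_refl.
have Ltrans : forall l1 l2 l3, leb l1 l2 -> leb l2 l3 -> leb l1 l3.
  move=> l1 l2 l3 /asbP h1 /asbP h2. apply/asbP. exact: lee_trans h2.
have Ltot : forall l l', leb l l' || leb l' l.
  move=> l l'. case: (Q1 l l') => /lee_im q; apply/orP; [left|right]; exact/asbP.
have Lneg : forall l l', leb l l' = leb (lneg l') (lneg l).
  move=> l l'. apply: asb_iff. rewrite !lv_neg !lee_im. by rewrite -im_contra.
have Lbot : forall l, leb (inr false) l.
  move=> l. apply/asbP. rewrite /lee /= cj0. exact: le_bot.
have Ltop : forall l, leb l (inr true).
  move=> l. apply/asbP. exact: le_top.
have Lnt : ~~ leb (inr true) (inr false).
  apply/negP => /asbP. rewrite /lee /= cj1 => hb. apply: ne.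
  apply: le_trans hb _. exact: le_bot.
set W := Wv leb.
have Dpos : (0 < DD n)%N.
  have := Wv_leb Lrefl Ltrans Ltot Lneg Lbot Ltop Lnt (inr true) (inr false).
  rewrite (negbTE Lnt) (Wv_bot Lrefl Ltrans Lbot Lnt) (Wv_top Lrefl Ltrans Lneg Lbot Lnt).
  by case: (DD n).
have DposR : (0 < INR (DD n))%R by apply: lt_0_INR; apply/ltP.
pose val (l : Lit n) := (INR (W l) / INR (DD n))%R.
have V0 : val (inr false) = 0%R.
  by rewrite /val /W (Wv_bot Lrefl Ltrans Lbot Lnt) /= /Rdiv Rmult_0_l.
have V1 : val (inr true) = 1%R.
  rewrite /val /W (Wv_top Lrefl Ltrans Lneg Lbot Lnt). field. lra.
have Vn : forall l, val (lneg l) = (1 - val l)%R.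
  move=> l. rewrite /val /W (Wv_neg Ltrans Lneg Lbot Ltop Lnt).
  have hl := Wv_le Ltrans Lneg Lbot Ltop Lnt l.
  rewrite minus_INR; last by apply/leP. field. lra.
have Vle : forall l l', leb l l' = true <-> (val l <= val l')%R.
{ move=> l l'. rewrite (Wv_leb Lrefl Ltrans Ltot Lneg Lbot Ltop Lnt) /val -/W.
  split.
  - move/INR_leq => hh. apply: Rmult_le_compat_r => //.
    apply: Rlt_le. exact: Rinv_0_lt_compat.
  - move=> hh. apply: INR_leq'. 
    have := Rmult_le_compat_r (INR (DD n)) _ _ (Rlt_le _ _ DposR) hh.
    rewrite /Rdiv !Rmult_assoc Rinv_l; last lra. by rewrite !Rmult_1_r. }
have ER := evalR_lit V0 V1 Vn Vle.
pose js : {ffun 'I_n -> 'I_(DD n).+1} := [ffun i => inord (W (inl (i, true)))].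
have Hjs : forall i, gp js i = val (inl (i, true)).
  move=> i. rewrite /gp /js ffunE inordK //.
  rewrite ltnS. exact: (Wv_le Ltrans Lneg Lbot Ltop Lnt).
have Hfg := H js.
rewrite (evalR_ext f Hjs) (evalR_ext g Hjs) !ER in Hfg.
have hlg : leb (lit leb f) (lit leb g) by apply/Vle; rewrite Hfg; lra.
have sf := lit_sound eidem Q1 Q2 f.
have sg := lit_sound eidem Q1 Q2 g.
apply: ne. apply/lee_im.
apply: (lee_trans eidem sf.1). apply: (lee_trans eidem _ sg.2).
exact/asbP.
Qed.

Theorem complete n (f g : form n) :
  (forall js, evalR (gp js) f = evalR (gp js) g) -> fequiv f g.
Proof.
move=> H A v. apply: le_anti; apply: one_dir => // js.
Qed.

Open Scope R_scope.

Ltac nodec t := lazymatch t with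
  | context [Rle_dec _ _] => fail | context [Rlt_dec _ _] => fail | _ => idtac end.
Ltac rcase := unfold std_conj, std_imp, Rmin, Rmax in *;
  repeat match goal with
  | |- context [Rle_dec ?a ?b] => nodec a; nodec b;
        destruct (Rle_dec a b); cbv beta iota delta [is_left]
  | |- context [Rlt_dec ?a ?b] => nodec a; nodec b;
        destruct (Rlt_dec a b); cbv beta iota delta [is_left]
  end; lra.

Definition U := {x : R | 0 <= x <= 1}.
Lemma U_ext (a b : U) : proj1_sig a = proj1_sig b -> a = b.
Proof. destruct a as [a ha], b as [b hb]; simpl; intros ->. f_equal. apply: proof_irrelevance. Qed.

Lemma in_min x y : 0 <= x <= 1 -> 0 <= y <= 1 -> 0 <= Rmin x y <= 1. Proof. intros; rcase. Qed.
Lemma in_max x y : 0 <= x <= 1 -> 0 <= y <= 1 -> 0 <= Rmax x y <= 1. Proof. intros; rcase. Qed.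
Lemma in_conj x y : 0 <= x <= 1 -> 0 <= y <= 1 -> 0 <= std_conj x y <= 1. Proof. intros; rcase. Qed.
Lemma in_imp x y : 0 <= x <= 1 -> 0 <= y <= 1 -> 0 <= std_imp x y <= 1. Proof. intros; rcase. Qed.
Lemma in_0 : 0 <= 0 <= 1. Proof. lra. Qed.
Lemma in_1 : 0 <= 1 <= 1. Proof. lra. Qed.

Definition Umin (a b : U) : U := exist _ _ (in_min (proj2_sig a) (proj2_sig b)).
Definition Umax (a b : U) : U := exist _ _ (in_max (proj2_sig a) (proj2_sig b)).
Definition Uconj (a b : U) : U := exist _ _ (in_conj (proj2_sig a) (proj2_sig b)).
Definition Uimp (a b : U) : U := exist _ _ (in_imp (proj2_sig a) (proj2_sig b)).
Definition U0 : U := exist _ _ in_0.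
Definition U1 : U := exist _ _ in_1.

Ltac uu := repeat match goal with a : U |- _ => destruct a as [?a ?] end;
  try apply: U_ext; simpl in *.

Lemma U_meetA x y z : Umin x (Umin y z) = Umin (Umin x y) z. Proof. uu; rcase. Qed.
Lemma U_joinA x y z : Umax x (Umax y z) = Umax (Umax x y) z. Proof. uu; rcase. Qed.
Lemma U_meetC x y : Umin x y = Umin y x. Proof. uu; rcase. Qed.
Lemma U_joinC x y : Umax x y = Umax y x. Proof. uu; rcase. Qed.
Lemma U_meetK x y : Umin x (Umax x y) = x. Proof. uu; rcase. Qed.
Lemma U_joinK x y : Umax x (Umin x y) = x. Proof. uu; rcase. Qed.
Lemma U_bot_le x : Umin U0 x = U0. Proof. uu; rcase. Qed.
Lemma U_le_top x : Umin x U1 = x. Proof. uu; rcase. Qed.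
Lemma U_conjA x y z : Uconj x (Uconj y z) = Uconj (Uconj x y) z. Proof. uu; rcase. Qed.
Lemma U_conjC x y : Uconj x y = Uconj y x. Proof. uu; rcase. Qed.
Lemma U_conj1 x : Uconj x U1 = x. Proof. uu; rcase. Qed.
Lemma U_resid x y z : Umin (Uconj x y) z = Uconj x y <-> Umin x (Uimp y z) = x.
Proof.
uu. split => h.
- apply: U_ext. simpl. move: (f_equal (@proj1_sig _ _) h) => /=. clear h. rcase.
- apply: U_ext. simpl. move: (f_equal (@proj1_sig _ _) h) => /=. clear h. rcase.
Qed.
Lemma U_prelin x y : Umax (Uimp x y) (Uimp y x) = U1. Proof. uu; rcase. Qed.
Lemma U_axiom x y : Umax (Uimp (Uconj x y) U0) (Uimp (Umin x y) (Uconj x y)) = U1.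
Proof. uu; rcase. Qed.
Lemma U_invol x : Uimp (Uimp x U0) U0 = x. Proof. uu; rcase. Qed.

Definition S01 : NMAlg := Build_NMAlg U_meetA U_joinA U_meetC U_joinC U_meetK U_joinK
  U_bot_le U_le_top U_conjA U_conjC U_conj1 U_resid U_prelin U_axiom U_invol.

Lemma eval_S01 n (p : 'I_n -> R) (hp : forall i, 0 <= p i <= 1) f :
  proj1_sig (eval S01 (fun i => exist _ (p i) (hp i)) f) = evalR p f.
Proof.
elim: f => [i| | |a IHa b IHb|a IHa b IHb|a IHa b IHb|a IHa b IHb] //=;
  by rewrite IHa IHb.
Qed.

Lemma sound n (f g : form n) : fequiv f g ->
  forall p : 'I_n -> R, (forall i, 0 <= p i <= 1) -> evalR p f = evalR p g.
Proof.
move=> h p hp. rewrite -(eval_S01 hp f) -(eval_S01 hp g). by rewrite h.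
Qed.

Lemma evalR_range n (p : 'I_n -> R) (hp : forall i, 0 <= p i <= 1) f :
  0 <= evalR p f <= 1.
Proof. rewrite -(eval_S01 hp f). exact: (proj2_sig (eval S01 (fun i => exist _ (p i) (hp i)) f)). Qed.

Definition rnd (x : R) : R :=
  if Rlt_dec x (1/2) then 0 else if Rlt_dec (1/2) x then 1 else 1/2.

Lemma rnd_min x y : 0 <= x <= 1 -> 0 <= y <= 1 -> rnd (Rmin x y) = Rmin (rnd x) (rnd y).
Proof. move=> *; unfold rnd; rcase. Qed.
Lemma rnd_max x y : 0 <= x <= 1 -> 0 <= y <= 1 -> rnd (Rmax x y) = Rmax (rnd x) (rnd y).
Proof. move=> *; unfold rnd; rcase. Qed.
Lemma rnd_conj x y : 0 <= x <= 1 -> 0 <= y <= 1 -> rnd (std_conj x y) = std_conj (rnd x) (rnd y).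
Proof. move=> *; unfold rnd; rcase. Qed.
Lemma rnd_imp x y : 0 <= x <= 1 -> 0 <= y <= 1 -> rnd (std_imp x y) = std_imp (rnd x) (rnd y).
Proof. move=> *; unfold rnd; rcase. Qed.

Lemma rnd_eval n (p : 'I_n -> R) (hp : forall i, 0 <= p i <= 1) f :
  evalR (fun i => rnd (p i)) f = rnd (evalR p f).
Proof.
elim: f => [i| | |a IHa b IHb|a IHa b IHb|a IHa b IHb|a IHa b IHb] /=.
- done.
- rewrite /rnd; rcase.
- rewrite /rnd; rcase.
- by rewrite IHa IHb rnd_min //; apply: evalR_range.
- by rewrite IHa IHb rnd_max //; apply: evalR_range.
- by rewrite IHa IHb rnd_conj //; apply: evalR_range.
- by rewrite IHa IHb rnd_imp //; apply: evalR_range.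
Qed.

Close Scope R_scope.


Section Count.
Variable n : nat.
Implicit Types f g a b : form n.

Definition tp3 (mu : {ffun 'I_n -> 'I_3}) : 'I_n -> R := fun i => three_val (mu i).

Lemma three_range (k : 'I_3) : (0 <= three_val k <= 1)%R.
Proof.
case: k => [[|[|[|k]]] hk] //=; rewrite /three_val /=; try lra.
Qed.
Lemma tp3_range mu : forall i, (0 <= tp3 mu i <= 1)%R.
Proof. move=> i; exact: three_range. Qed.

Lemma is_oneP x : is_one x = true <-> x = 1%R.
Proof. rewrite /is_one. by case: Req_EM_T. Qed.
Lemma is_oneF x : is_one x = false <-> x <> 1%R.
Proof. rewrite /is_one. by case: Req_EM_T. Qed.

Definition Sset f := [set mu : {ffun 'I_n -> 'I_3} | is_one (evalR (tp3 mu) f)].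
Lemma count_Sset f : count_models3 f = #|Sset f|. Proof. by []. Qed.
Lemma in_Sset f mu : (mu \in Sset f) = is_one (evalR (tp3 mu) f).
Proof. by rewrite inE. Qed.

Lemma count_equiv f g : fequiv f g -> count_models3 f = count_models3 g.
Proof.
move=> h. rewrite !count_Sset. apply: eq_card => mu. rewrite !in_Sset.
by rewrite (sound h (tp3_range mu)).
Qed.

Lemma count_bot : count_models3 (@FBot n) = 0.
Proof.
rewrite count_Sset. apply/eqP; rewrite cards_eq0. apply/eqP/setP => mu.
rewrite in_Sset inE /=. apply/is_oneF. lra.
Qed.

Lemma is_one_max x y : (0 <= x <= 1)%R -> (0 <= y <= 1)%R ->
  is_one (Rmax x y) = is_one x || is_one y.
Proof.
move=> hx hy. case E: (is_one x || is_one y).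
- apply/is_oneP. case/orP: E => /is_oneP ->; rcase.
- apply/is_oneF. move/negbT: E. rewrite negb_or => /andP [/negbTE/is_oneF e1 /negbTE/is_oneF e2].
  rcase.
Qed.
Lemma is_one_min x y : (0 <= x <= 1)%R -> (0 <= y <= 1)%R ->
  is_one (Rmin x y) = is_one x && is_one y.
Proof.
move=> hx hy. case E: (is_one x && is_one y).
- apply/is_oneP. case/andP: E => /is_oneP -> /is_oneP ->. rcase.
- apply/is_oneF. move/negbT: E. rewrite negb_and => /orP [/negbTE/is_oneF e1|/negbTE/is_oneF e1];
  rcase.
Qed.

Lemma count_ie a b :
  (count_models3 (FOr a b) + count_models3 (FAnd a b) = count_models3 a + count_models3 b)%N.
Proof.
rewrite !count_Sset.
have -> : Sset (FOr a b) = Sset a :|: Sset b.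
  apply/setP => mu. rewrite in_setU !in_Sset /=. apply: is_one_max; exact: evalR_range (tp3_range mu) _.
have -> : Sset (FAnd a b) = Sset a :&: Sset b.
  apply/setP => mu. rewrite in_setI !in_Sset /=. apply: is_one_min; exact: evalR_range (tp3_range mu) _.
exact: cardsUI.
Qed.

Lemma ji_model_idem g mu : join_irreducible g -> mu \in Sset g -> Defs.idempotent g.
Proof.
move=> [_ hji] hmu.
have e : fequiv g (FOr (FConj g g) (FAnd g (FImp g FBot))).
  move=> A v /=. exact: split_sq.
case: (hji _ _ e) => h.
- move=> A v. by rewrite -h.
- exfalso. move: hmu. rewrite in_Sset (sound h (tp3_range mu)) /= => /is_oneP h1.
  move: h1. rcase.
Qed.

Definition Hr (c : nat) (x : R) : R :=
  match c with
  | 0 => std_imp x (std_imp x 0)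
  | 1 => std_imp (std_conj x x) 0
  | _ => std_imp (std_conj (std_imp x 0) (std_imp x 0)) 0
  end.
Definition Kr (c : nat) (x : R) : R :=
  match c with
  | 0 => std_imp (std_imp x 0) x
  | 1 => std_imp (Rmin x x) (std_conj x x)
  | _ => std_imp (Rmin (std_imp x 0) (std_imp x 0)) (std_conj (std_imp x 0) (std_imp x 0))
  end.
Definition Hf (c : nat) (t : form n) : form n :=
  match c with
  | 0 => FImp t (FImp t FBot)
  | 1 => FImp (FConj t t) FBot
  | _ => FImp (FConj (FImp t FBot) (FImp t FBot)) FBot
  end.
Definition Kf (c : nat) (t : form n) : form n :=
  match c with
  | 0 => FImp (FImp t FBot) t
  | 1 => FImp (FAnd t t) (FConj t t)
  | _ => FImp (FAnd (FImp t FBot) (FImp t FBot)) (FConj (FImp t FBot) (FImp t FBot))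
  end.
Lemma HKtop c t A v : nm_join (eval A v (Hf c t)) (eval A v (Kf c t)) = nm_top A.
Proof. case: c => [|[|c]] /=; [exact: nm_prelin|exact: nm_axiom|exact: nm_axiom]. Qed.
Lemma Hf_eval c t p : evalR p (Hf c t) = Hr c (evalR p t).
Proof. by case: c => [|[|c]]. Qed.
Lemma Kf_eval c t p : evalR p (Kf c t) = Kr c (evalR p t).
Proof. by case: c => [|[|c]]. Qed.

Lemma sep_real (a b : 'I_3) : a != b -> exists c,
  (Hr c (three_val a) <> 1 \/ Hr c (three_val b) <> 1)%R /\
  (Kr c (three_val a) <> 1 \/ Kr c (three_val b) <> 1)%R.
Proof.
case: a => [[|[|[|a]]] ha] //; case: b => [[|[|[|b]]] hb] // _;
  rewrite /three_val /=.
- exists 2%N; rewrite /Hr /Kr; split; [left|right]; rcase.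
- exists 0%N; rewrite /Hr /Kr; split; [right|left]; rcase.
- exists 2%N; rewrite /Hr /Kr; split; [right|left]; rcase.
- exists 1%N; rewrite /Hr /Kr; split; [right|left]; rcase.
- exists 0%N; rewrite /Hr /Kr; split; [left|right]; rcase.
- exists 1%N; rewrite /Hr /Kr; split; [left|right]; rcase.
Qed.

Lemma conj1_eq x : (0 <= x <= 1)%R -> std_conj 1 x = 1%R -> x = 1%R.
Proof. move=> hx. rcase. Qed.

Lemma ji_sep g c t mu1 mu2 : join_irreducible g ->
  mu1 \in Sset g -> mu2 \in Sset g ->
  (evalR (tp3 mu1) (Hf c t) <> 1 \/ evalR (tp3 mu2) (Hf c t) <> 1)%R ->
  (evalR (tp3 mu1) (Kf c t) <> 1 \/ evalR (tp3 mu2) (Kf c t) <> 1)%R -> False.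
Proof.
move=> [_ hji] h1 h2 hh hk.
have e : fequiv g (FOr (FConj g (Hf c t)) (FConj g (Kf c t))).
  move=> A v /=. apply: split_top. exact: HKtop.
have key : forall s mu, mu \in Sset g -> fequiv g (FConj g s) -> evalR (tp3 mu) s = 1%R.
  move=> s mu hmu hs. move: hmu. rewrite in_Sset (sound hs (tp3_range mu)) /= => /is_oneP hm.
  have hg : evalR (tp3 mu) g = 1%R.
    by rewrite (sound hs (tp3_range mu)).
  rewrite hg in hm. apply: conj1_eq hm. exact: evalR_range (tp3_range mu) _.
case: (hji _ _ e) => hs.
- case: hh => hh; apply: hh; exact: key hs.
- case: hk => hk; apply: hk; exact: key hs.
Qed.

Lemma ji_count_le1 g : join_irreducible g -> (count_models3 g <= 1)%N.
Proof.
move=> hj. rewrite count_Sset leqNgt. apply/negP => /card_gt1P [mu1 [mu2 [h1 h2 hne]]].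
have [i hi] : exists i, mu1 i != mu2 i.
  apply: NNPP => hn. move/negP: hne; apply. apply/eqP/ffunP => i.
  apply/eqP. apply: negbNE. apply/negP => hi. apply: hn. by exists i.
have [c [hh hk]] := sep_real hi.
apply: (ji_sep (c := c) (t := FVar i) hj h1 h2).
- by rewrite !Hf_eval.
- by rewrite !Kf_eval.
Qed.
End Count.


Section Main.
Variable n : nat.
Implicit Types f g a b : form n.

Lemma DD_pos : (0 < DD n)%N.
Proof.
rewrite /DD /NN. have : (0 < #|{: Lit n}|)%N by apply/card_gt0P; exists (inr false).
lia.
Qed.
Lemma DDR_pos : (0 < INR (DD n))%R.
Proof. apply: lt_0_INR. apply/ltP. exact: DD_pos. Qed.

Lemma gp_range (js : {ffun 'I_n -> 'I_(DD n).+1}) : forall i, (0 <= gp js i <= 1)%R.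
Proof.
move=> i. rewrite /gp. have hj : (js i <= DD n)%N by rewrite -ltnS.
have := INR_leq hj. have := pos_INR (js i). have := DDR_pos.
move=> h0 h1 h2. split.
- apply: Rmult_le_pos => //. apply: Rlt_le. exact: Rinv_0_lt_compat.
- rewrite /Rdiv -(Rinv_r (INR (DD n))); last lra.
  apply: Rmult_le_compat_r => //. apply: Rlt_le; exact: Rinv_0_lt_compat.
Qed.

Definition pick3 (y : R) : 'I_3 :=
  if Rlt_dec y (1/2) then ord0 else if Rlt_dec (1/2) y then inord 2 else inord 1.
Lemma pick3_val y : three_val (pick3 y) = rnd y.
Proof.
rewrite /pick3 /rnd /three_val.
case: Rlt_dec => h1 /=; first by rewrite /Rdiv Rmult_0_l.
case: Rlt_dec => h2 /=; rewrite inordK //=; field.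
Qed.

Lemma ji_model_exists g : Defs.idempotent g -> ~ fequiv g FBot ->
  exists mu, mu \in Sset g.
Proof.
move=> hid nb.
have [js hjs] : exists js, evalR (gp js) g <> 0%R.
  apply: NNPP => hn. apply: nb. apply: complete => js /=.
  apply: NNPP => h. apply: hn. by exists js.
set x := evalR (gp js) g in hjs.
have hx := evalR_range (gp_range js) g. rewrite -/x in hx.
have hc : std_conj x x = x.
  have := sound hid (gp_range js). by rewrite /= -/x.
have hr : rnd x = 1%R by move: hc hjs; rewrite /rnd; rcase.
exists [ffun i => pick3 (gp js i)].
rewrite in_Sset. apply/is_oneP.
rewrite (@evalR_ext _ _ (fun i => rnd (gp js i))); last first.
  by move=> i; rewrite /tp3 ffunE pick3_val.
by rewrite rnd_eval ?hr //; exact: gp_range.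
Qed.

Lemma ji_count g : join_irreducible g ->
  (Defs.idempotent g -> count_models3 g = 1%N) /\
  (~ Defs.idempotent g -> count_models3 g = 0%N).
Proof.
move=> hj. have hle := ji_count_le1 hj. split.
- move=> hid. have [mu hmu] := ji_model_exists hid hj.1.
  have : (0 < count_models3 g)%N by rewrite count_Sset; apply/card_gt0P; exists mu.
  lia.
- move=> nid. apply/eqP. rewrite count_Sset cards_eq0. apply/eqP/setP => mu.
  rewrite in_set0. apply/negP => hmu. apply: nid. apply: ji_model_idem hj _.
  exact: hmu.
Qed.

Definition rk (x : R) : nat :=
  \sum_(j < (DD n).+1) (if Rle_dec (INR j / INR (DD n)) x then 1 else 0)%N.
Definition Mf f : nat := \sum_(js : {ffun 'I_n -> 'I_(DD n).+1}) rk (evalR (gp js) f).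

Lemma grid_val js f : exists j : 'I_(DD n).+1, evalR (gp js) f = (INR j / INR (DD n))%R.
Proof.
have D0 := DDR_pos.
have top : exists j : 'I_(DD n).+1, 1%R = (INR j / INR (DD n))%R.
  exists ord_max. rewrite /=. field. lra.
have bot : exists j : 'I_(DD n).+1, 0%R = (INR j / INR (DD n))%R.
  exists ord0. by rewrite /= /Rdiv Rmult_0_l.
have neg : forall j : 'I_(DD n).+1, exists j' : 'I_(DD n).+1,
    (1 - INR j / INR (DD n))%R = (INR j' / INR (DD n))%R.
  move=> j. have hj : (j <= DD n)%N by rewrite -ltnS.
  exists (inord (DD n - j)). rewrite inordK; last lia.
  rewrite minus_INR; last by apply/leP. field. lra.
elim: f => [i| | |a IHa b IHb|a IHa b IHb|a IHa b IHb|a IHa b IHb] /=;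
  try (case: IHa => ja ->; case: IHb => jb ->).
- by exists (js i).
- exact: bot.
- exact: top.
- rewrite /Rmin. case: Rle_dec => ?; [by exists ja|by exists jb].
- rewrite /Rmax. case: Rle_dec => ?; [by exists jb|by exists ja].
- rewrite /std_conj /Rmin. case: Rlt_dec => ?; last exact: bot.
  case: Rle_dec => ?; [by exists ja|by exists jb].
- rewrite /std_imp /Rmax. case: Rle_dec => ?; first exact: top.
  case: Rle_dec => ?; [by exists jb|exact: neg].
Qed.

Lemma rk_mono x y : (x <= y)%R -> (rk x <= rk y)%N.
Proof.
move=> h. apply: leq_sum => j _.
case: Rle_dec => h1; case: Rle_dec => h2 //. exfalso; lra.
Qed.
Lemma rk_strict x y : (x < y)%R -> (exists j : 'I_(DD n).+1, y = INR j / INR (DD n))%R ->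
  (rk x < rk y)%N.
Proof.
move=> h [j hj]. apply: (@sum_lt _ _ _ j).
- move=> i. case: Rle_dec => h1; case: Rle_dec => h2 //. exfalso; lra.
- case: Rle_dec => h1; case: Rle_dec => h2 //; exfalso; lra.
Qed.

Lemma Mf_lt a f : (forall js, evalR (gp js) a <= evalR (gp js) f)%R ->
  (exists js, evalR (gp js) a <> evalR (gp js) f) -> (Mf a < Mf f)%N.
Proof.
move=> hle [js hjs]. apply: (@sum_lt _ _ _ js).
- move=> i. exact: rk_mono.
- apply: rk_strict; last exact: grid_val.
  have := hle js. lra.
Qed.

End Main.


Lemma strong_ind_M n (P : form n -> Prop) :
  (forall f, (forall g, (Mf g < Mf f)%N -> P g) -> P f) -> forall f, P f.
Proof.
move=> H f. have : (Mf f <= Mf f)%N by [].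
move: {2}(Mf f) => m. elim: m f => [|m IH] f hf; apply: H => g hg.
- lia.
- apply: IH. lia.
Qed.

Lemma fequiv_sym n (f g : form n) : fequiv f g -> fequiv g f.
Proof. move=> h A v. by rewrite h. Qed.

Lemma not_equiv_pt n (f g : form n) : ~ fequiv f g ->
  exists js, evalR (gp js) f <> evalR (gp js) g.
Proof.
move=> h. apply: NNPP => hn. apply: h. apply: complete => js.
apply: NNPP => h'. apply: hn. by exists js.
Qed.

Theorem theorem5 (n : nat) (hn : (1 <= n)%N) :
  (exists nu : form n -> R, is_chi_plus nu) /\
  (forall nu : form n -> R, is_chi_plus nu ->
     forall phi : form n, nu phi = INR (count_models3 phi)).
Proof.
split.
- exists (fun f => INR (count_models3 f)). split; [split|split].
  + move=> a b h. by rewrite (count_equiv h).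
  + move=> a b. rewrite -!plus_INR. congr INR. have := count_ie a b. lia.
  + by rewrite count_bot.
  + move=> g hg. have [h1 h2] := ji_count hg. split.
    * move=> hi. by rewrite h1.
    * move=> hi. by rewrite h2.
- move=> nu [[hresp hval] [hbot hji]].
  apply: strong_ind_M => f IH.
  case: (classic (fequiv f FBot)) => hb.
  { by rewrite (hresp _ _ hb) hbot (count_equiv hb) count_bot. }
  case: (classic (join_irreducible f)) => hj.
  { have [c1 c0] := ji_count hj. have [n1 n0] := hji f hj.
    case: (classic (Defs.idempotent f)) => hi.
    - by rewrite (n1 hi) (c1 hi).
    - by rewrite (n0 hi) (c0 hi). }
  have [a [b [hab [ha hb']]]] : exists a b, fequiv f (FOr a b) /\ ~ fequiv f a /\ ~ fequiv f b.
  { apply: NNPP => hne. apply: hj. split => // a b hab.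
    apply: NNPP => hn'. apply: hne. exists a, b. split => //. split.
    - move=> h; apply: hn'; by left.
    - move=> h; apply: hn'; by right. }
  have pw : forall js, evalR (gp js) f = Rmax (evalR (gp js) a) (evalR (gp js) b).
    move=> js. exact: (sound hab (gp_range js)).
  have [jsa hjsa] := not_equiv_pt (fun h => ha (fequiv_sym h)).
  have [jsb hjsb] := not_equiv_pt (fun h => hb' (fequiv_sym h)).
  have Ma : (Mf a < Mf f)%N.
    apply: Mf_lt; last by exists jsa.
    move=> js. rewrite pw. exact: Rmax_l.
  have Mb : (Mf b < Mf f)%N.
    apply: Mf_lt; last by exists jsb.
    move=> js. rewrite pw. exact: Rmax_r.
  have Mab : (Mf (FAnd a b) < Mf f)%N.
  { apply: Mf_lt.
    + move=> js. rewrite pw /=. have := Rmin_l (evalR (gp js) a) (evalR (gp js) b).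
      have := Rmax_l (evalR (gp js) a) (evalR (gp js) b). lra.
    + exists jsa. rewrite pw /=. move: hjsa. rewrite pw.
      have := Rmin_l (evalR (gp jsa) a) (evalR (gp jsa) b).
      have := Rmax_l (evalR (gp jsa) a) (evalR (gp jsa) b). lra. }
  have e1 := hval a b.
  rewrite (IH _ Ma) (IH _ Mb) (IH _ Mab) in e1.
  rewrite (hresp _ _ hab) (count_equiv hab).
  have e2 := count_ie a b.
  have e3 : (INR (count_models3 (FOr a b)) + INR (count_models3 (FAnd a b)) =
            INR (count_models3 a) + INR (count_models3 b))%R.
    by rewrite -!plus_INR; congr INR; lia.
  lra.
Qed.
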